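(* Let $S$ be a set and $s:I_m\to S$ a non-constant sequence. Let $A=s(1)$, let $m_1\ge 1$ be maximal with $s(1)=\cdots=s(m_1)=A$, let $m_2\ge 0$ be maximal with $s(m)=s(m-1)=\cdots=s(m-m_2+1)=A$, and put $m'=m_1+m_2$ (so $m'<m$). If $\sigma\in\mathscr{T}_m$ satisfies $$\{\sigma^{-1}(m),\sigma^{-1}(m-1),\ldots,\sigma^{-1}(m-m'+1)\}=\{1,2,\ldots,m_1\}\cup\{m,m-1,\ldots,m-m_2+1\},$$ then there exists $\tau\in\mathscr{T}_{m-m'}\circ\tau_{m-m_2}$ such that $\sigma s=\tau s$.
   Context: $\mathcal{S}_m$ is the group of bijections of $I_m=\{1,\ldots,m\}$, with $\sigma\circ\tau$ meaning apply $\tau$ first. $\mathscr{T}_m=\{\sigma\in\mathcal{S}_m \mid \exists t\in I_m:\ \sigma(1)>\sigma(2)>\cdots>\sigma(t)=1,\ \sigma(t)<\sigma(t+1)<\cdots<\sigma(m)\}$; for $k\le m$, $\mathscr{T}_k$ is identified with the permutations in $\mathcal{S}_m$ fixing all symbols $>k$ whose restriction to $I_k$ lies in $\mathscr{T}_k$. For $i\in I_m$, $\tau_i(j)=i+1-j$ for $j\le i$ and $\tau_i(j)=j$ for $j>i$. $\mathscr{T}_{k}\circ\tau_{i}=\{\rho\circ\tau_i\mid\rho\in\mathscr{T}_k\}$. $\mathcal{S}_m$ acts on sequences $s:I_m\to S$ by $\sigma s=s\circ\sigma^{-1}$. *)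

(* Defs.v *)
(* Indices are 0-based: the paper's symbol j in I_m = {1..m}
   corresponds to the ordinal j-1 : 'I_m. *)
From mathcomp Require Import all_boot all_order all_fingroup.
Set Implicit Arguments. Unset Strict Implicit. Unset Printing Implicit Defensive.

(* membership in script-T_k, viewed inside S_m: sigma fixes every (0-based)
   symbol >= k, and on {0..k-1} it is decreasing down to the value 0 at
   position t and increasing afterwards. *)
Definition inT (m k : nat) (sigma : {perm 'I_m}) : Prop :=
  (forall j : 'I_m, k <= j -> sigma j = j) /\
  exists t : 'I_m, [/\ t < k, val (sigma t) = 0,
    (forall i j : 'I_m, i < j -> j <= t -> sigma j < sigma i) &
    (forall i j : 'I_m, t <= i -> i < j -> j < k -> sigma i < sigma j)].

(* tau_i (1-based): j |-> i+1-j for j <= i, j otherwise.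
   0-based: j |-> i-1-j for j < i, j otherwise (i is capped at m). *)
Definition tau_fun (m i : nat) (j : 'I_m) : 'I_m :=
  if j < minn i m then insubd j ((minn i m).-1 - j) else j.

Lemma tau_fun_val (m i : nat) (j : 'I_m) :
  val (tau_fun i j) = if j < minn i m then (minn i m).-1 - j else val j.
Proof.
rewrite /tau_fun; case: ifP => // hj; rewrite val_insubd.
have -> // : (minn i m).-1 - j < m.
apply: leq_ltn_trans (leq_subr _ _) _.
have hm : minn i m <= m by exact: geq_minr.
have hp : 0 < minn i m by exact: leq_ltn_trans (leq0n j) hj.
by rewrite prednK // (leq_trans _ hm) // -{2}(prednK hp).
Qed.

Lemma tau_funK (m i : nat) : involutive (@tau_fun m i).
Proof.
move=> j; apply: val_inj; rewrite tau_fun_val.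
have e := tau_fun_val i j; rewrite /= in e *; rewrite e.
case hj: (j < minn i m); first last.
  by rewrite hj.
have hp : 0 < minn i m by exact: leq_ltn_trans (leq0n j) hj.
have -> : (minn i m).-1 - j < minn i m.
  by rewrite (leq_ltn_trans (leq_subr _ _)) // prednK.
by rewrite subKn // -ltnS prednK.
Qed.

Definition tau_perm (m i : nat) : {perm 'I_m} :=
  perm (can_inj (@tau_funK m i)).

(* Main.v *)
Require Import Defs.
From mathcomp Require Import all_boot all_order all_fingroup.
From mathcomp Require Import zify.

Theorem mainTheorem12 (T : Type) (m : nat) (s : 'I_m -> T)
  (hnc : exists i j : 'I_m, s i <> s j)
  (A : T) (hA : forall j : 'I_m, val j = 0 -> s j = A)
  (m1 m2 : nat)
  (hm1 : 1 <= m1 <= m)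
  (hm1A : forall j : 'I_m, j < m1 -> s j = A)
  (hm1max : forall j : 'I_m, val j = m1 -> s j <> A)
  (hm2 : m2 <= m)
  (hm2A : forall j : 'I_m, m - m2 <= j -> s j = A)
  (hm2max : forall j : 'I_m, (val j).+1 = m - m2 -> s j <> A)
  (sigma : {perm 'I_m}) (hsigma : inT m sigma)
  (hset : [set (sigma^-1)%g k | k : 'I_m & m - (m1 + m2) <= k]
          = [set j : 'I_m | (j < m1) || (m - m2 <= j)]) :
  exists tau : {perm 'I_m},
    (exists rho : {perm 'I_m},
       inT (m - (m1 + m2)) rho /\ tau = (tau_perm m (m - m2) * rho)%g) /\
    (forall x : 'I_m, s ((sigma^-1)%g x) = s ((tau^-1)%g x)).
Proof.
set n := m - (m1 + m2).
have hkey p : (n <= sigma p) = (p < m1) || (m - m2 <= p).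
  move/setP: hset => /(_ p); rewrite [in RHS]inE => <-.
  apply/idP/imsetP.
  - move=> h; exists (sigma p); first by rewrite inE.
    by rewrite permK.
  - by move=> [k]; rewrite inE => hk ->; rewrite permKV.
have hblock (p : 'I_m) : (p < m1) || (m - m2 <= p) -> s p = A.
  by case/orP; [apply: hm1A | apply: hm2A].
have hnm : 0 < n.
  case: hnc => i [j] hij; rewrite lt0n; apply/negP => /eqP hn0.
  apply: hij; rewrite !hblock //.
    by move: (ltn_ord j); rewrite /n in hn0; lia.
  by move: (ltn_ord i); rewrite /n in hn0; lia.
set tf := tau_fun (m - m2) : 'I_m -> 'I_m.
have tfv y : val (tf y) = if y < m - m2 then (m - m2).-1 - y else val y.
  by rewrite /tf tau_fun_val (minn_idPl (leq_subr _ _)).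
have tfn (y : 'I_m) : y < n -> val (tf y) = (m - m2).-1 - y.
  by move=> hy; rewrite tfv ifT //; rewrite /n in hy; lia.
have tfK : involutive tf by exact: tau_funK.
have tfmid (y : 'I_m) : y < n -> m1 <= tf y < m - m2.
  move=> hy; rewrite tfv ifT; rewrite /n in hy; lia.
have tfmid' (p : 'I_m) : m1 <= p < m - m2 -> tf p < n.
  move=> hp; rewrite tfv ifT /n; lia.
have sigmid (p : 'I_m) : m1 <= p < m - m2 -> sigma p < n.
  move=> hp; rewrite ltnNge hkey; lia.
pose rf (y : 'I_m) := if y < n then sigma (tf y) else y.
have rf_inj : injective rf.
  move=> a b; rewrite /rf.
  case: (ltnP a n) => ha; case: (ltnP b n) => hb.
  - by move/perm_inj/(can_inj tfK).
  - move=> e; have := sigmid _ (tfmid _ ha); rewrite e; lia.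
  - move=> e; have := sigmid _ (tfmid _ hb); rewrite -e; lia.
  - by [].
pose rho := perm rf_inj.
have rhoE y : rho y = rf y by rewrite permE.
have tpE y : tau_perm m (m - m2) y = tf y by rewrite permE.
exists (tau_perm m (m - m2) * rho)%g; split.
  exists rho; split => //; split.
    by move=> j hj; rewrite rhoE /rf ltnNge hj.
  case: hsigma => _ [t0 [ht0 hs0 hdec hinc]].
  have t0mid : m1 <= t0 < m - m2.
    have : sigma t0 < n by rewrite hs0.
    by rewrite ltnNge hkey; lia.
  exists (tf t0); split.
  - by apply: tfmid'.
  - by rewrite rhoE /rf ifT ?tfK //; apply: tfmid'.
  - move=> i j hij hjt.
    have e0 : val (tf t0) = (m - m2).-1 - t0 by rewrite tfv ifT; lia.
    move: hjt; rewrite e0 => hjt.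
    have hj : j < n by rewrite /n; lia.
    have hi : i < n by lia.
    rewrite !rhoE /rf hi hj; apply: hinc; rewrite ?tfn //; rewrite /n in hi hj; lia.
  - move=> i j hti hij hjn.
    have e0 : val (tf t0) = (m - m2).-1 - t0 by rewrite tfv ifT; lia.
    move: hti; rewrite e0 => hti.
    have hi : i < n by lia.
    rewrite !rhoE /rf hjn hi; apply: hdec; rewrite ?tfn //; rewrite /n in hi hjn; lia.
move=> x.
have tauE p : (tau_perm m (m - m2) * rho)%g p = rho (tf p) by rewrite permM tpE.
set tau := (tau_perm m (m - m2) * rho)%g.
have taumid (p : 'I_m) : m1 <= p < m - m2 -> tau p = sigma p.
  move=> hp; rewrite tauE rhoE /rf ifT ?tfK //; exact: tfmid'.
rewrite -[in RHS](permKV sigma x).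
set p := (sigma^-1)%g x.
case hp: ((p < m1) || (m - m2 <= p)).
- rewrite hblock //.
  set q := (tau^-1)%g (sigma p).
  case hq: ((q < m1) || (m - m2 <= q)); first by rewrite hblock.
  have : tau q = sigma p by rewrite /q permKV.
  rewrite taumid; last by move: hq; clear; lia.
  by move=> e; have := hkey q; rewrite e hkey hp hq.
- by rewrite -(taumid p) ?permK //; move: hp; clear; lia.
Qed.
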